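(* Let $\mathcal{S}=\{s_1,\dots,s_N\}$ be a finite state space, $\mathcal{A}$ a finite action space, $\gamma\in(0,1)$, and consider the real MDP $\langle\mathcal{S},\mathcal{A},\mathbb{P},R,\gamma\rangle$ and the DT MDP $\langle\mathcal{S},\mathcal{A},\mathbb{P}',R',\gamma\rangle$. Then for all states $s_i,s_j,s_k,s_l\in\mathcal{S}$ and all $n\in\mathbb{N}$, $$d_n(s_i,s_l)\le d_n(s_i,s_j)+d_n(s_k,s_j)+d_n(s_k,s_l).$$
   Context: $\mathbb{P}(\cdot|s,a),\mathbb{P}'(\cdot|s,a)$ are probability distributions on $\mathcal{S}$; $R,R':\mathcal{S}\times\mathcal{A}\to\mathbb{R}$. For distributions $P,Q$ on $\mathcal{S}$ and a cost $d:\mathcal{S}\times\mathcal{S}\to[0,\infty)$ (not required to vanish on the diagonal), $W_1(P,Q;d)=\min_\Lambda\sum_{i,j}\lambda_{i,j}d(s_i,s_j)$ over nonnegative $N\times N$ matrices with row sums $P(s_i)$ and column sums $Q(s_j)$. Define $d_0\equiv0$ and $d_n(s_i,s_j)=\max_a\{|R(s_i,a)-R'(s_j,a)|+\gamma W_1(\mathbb{P}(\cdot|s_i,a),\mathbb{P}'(\cdot|s_j,a);d_{n-1})\}$. In $d_n(x,y)$ the first argument $x$ is a state of the real MDP and the second $y$ a state of the DT MDP, so the inequality concerns real-MDP states $s_i,s_k$ and DT-MDP states $s_j,s_l$. *)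

(* Defs.v *)
From HB Require Import structures.
From mathcomp Require Import all_boot all_order all_algebra.
From mathcomp Require Import boolp classical_sets reals.
Set Implicit Arguments. Unset Strict Implicit. Unset Printing Implicit Defensive.
Import Order.TTheory GRing.Theory Num.Theory.
Local Open Scope ring_scope.
Local Open Scope classical_set_scope.

Section Bisim.
Variables (R : realType) (S A : finType).

Definition is_distr (p : S -> R) : Prop :=
  (forall s, 0 <= p s) /\ \sum_(s : S) p s = 1.

Definition is_coupling (p q : S -> R) (Lam : S -> S -> R) : Prop :=
  (forall i j, 0 <= Lam i j) /\
  (forall i, \sum_(j : S) Lam i j = p i) /\
  (forall j, \sum_(i : S) Lam i j = q j).

(* W_1(p, q; d) = min over couplings of sum_{i,j} Lam_{ij} d(s_i,s_j),
   expressed as the infimum of the (attained) set of transport costs *)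
Definition W1 (p q : S -> R) (d : S -> S -> R) : R :=
  inf [set c | exists Lam, is_coupling p q Lam /\
               c = \sum_(i : S) \sum_(j : S) Lam i j * d i j].

(* d_0 = 0, d_n(x,y) = max_a { |R(x,a) - R'(y,a)| + gamma W1(P(.|x,a), P'(.|y,a); d_{n-1}) } ;
   first argument: real-MDP state, second: DT-MDP state *)
Fixpoint dn (P P' : S -> A -> S -> R) (Rw Rw' : S -> A -> R) (gamma : R)
    (n : nat) : S -> S -> R :=
  match n with
  | 0%N => fun _ _ => 0
  | m.+1 => fun x y =>
      \big[Num.max/0]_(a : A)
        (`|Rw x a - Rw' y a| + gamma * W1 (P x a) (P' y a) (dn P P' Rw Rw' gamma m))
  end.
End Bisim.

(* Main.v *)
Require Import Defs.
From HB Require Import structures.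
From mathcomp Require Import all_boot all_order all_algebra.
From mathcomp Require Import boolp classical_sets reals.
From mathcomp Require Import ring lra.
Import Order.TTheory GRing.Theory Num.Theory.
Local Open Scope ring_scope.

Section Glue.
Variables (R : realType) (S : finType).

Lemma sum_div_cancel (a : R) (F : S -> R) (c : R) :
  \sum_k F k = c -> (c = 0 -> a = 0) -> \sum_k a * F k / c = a.
Proof.
move=> hF hc.
under eq_bigr do rewrite mulrAC.
rewrite -mulr_sumr hF.
have [c0|c0] := eqVneq c 0; first by rewrite (hc c0) !mul0r.
by rewrite mulfVK.
Qed.

Lemma col0 (L : S -> S -> R) (q : S -> R) i j :
  (forall i j, 0 <= L i j) -> (forall j, \sum_i L i j = q j) -> q j = 0 -> L i j = 0.
Proof.
move=> h0 hs hq; apply: (@psumr_eq0P _ _ predT (fun i => L i j)) => //.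
by rewrite hs.
Qed.

Lemma row0 (L : S -> S -> R) (q : S -> R) i j :
  (forall i j, 0 <= L i j) -> (forall i, \sum_j L i j = q i) -> q i = 0 -> L i j = 0.
Proof.
move=> h0 hs hq; apply: (@psumr_eq0P _ _ predT (fun j => L i j)) => //.
by rewrite hs.
Qed.

Lemma glue (p q r t : S -> R) (d : S -> S -> R) L1 L2 L3 :
  (forall s, 0 <= q s) -> (forall s, 0 <= r s) ->
  (forall i j k l, d i l <= d i j + d k j + d k l) ->
  is_coupling p q L1 -> is_coupling r q L2 -> is_coupling r t L3 ->
  exists L, is_coupling p t L /\
    \sum_i \sum_l L i l * d i l <=
      \sum_i \sum_j L1 i j * d i j + \sum_i \sum_j L2 i j * d i j
      + \sum_i \sum_j L3 i j * d i j.
Proof.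
move=> q0 r0 dtri [L10 [L1r L1c]] [L20 [L2r L2c]] [L30 [L3r L3c]].
pose M i j k := L1 i j * L2 k j / q j.
pose N i j k l := M i j k * L3 k l / r k.
have F1 i j : \sum_k M i j k = L1 i j.
  apply: sum_div_cancel; first exact: L2c.
  by move=> hq; exact: (col0 _ _ _ _ L10 L1c hq).
have F2 j k : \sum_i M i j k = L2 k j.
  rewrite /M; under eq_bigr do rewrite (mulrC (L1 _ j)).
  apply: sum_div_cancel; first exact: L1c.
  by move=> hq; exact: (col0 _ _ _ _ L20 L2c hq).
have F3 i j k : \sum_l N i j k l = M i j k.
  apply: sum_div_cancel; first exact: L3r.
  by move=> hr; rewrite /M (row0 _ _ _ _ L20 L2r hr) mulr0 mul0r.
have F4 j k l : \sum_i N i j k l = L2 k j * L3 k l / r k.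
  by rewrite /N -mulr_suml -mulr_suml F2.
have F5 k l : \sum_j L2 k j * L3 k l / r k = L3 k l.
  under eq_bigr do rewrite (mulrC (L2 _ _)).
  apply: sum_div_cancel; first exact: L2r.
  by move=> hr; exact: (row0 _ _ _ _ L30 L3r hr).
have N0 i j k l : 0 <= N i j k l.
  by rewrite /N /M !mulr_ge0 ?invr_ge0.
exists (fun i l => \sum_j \sum_k N i j k l); split; first split.
- by move=> i l; do 2 (apply: sumr_ge0 => ? _).
- split.
  + move=> i; rewrite exchange_big /= -L1r; apply: eq_bigr => j _.
    by rewrite exchange_big /= -F1; apply: eq_bigr => k _; rewrite F3.
  + move=> l; rewrite exchange_big /=.
    under eq_bigr do rewrite exchange_big /=.
    rewrite exchange_big /= -L3c; apply: eq_bigr => k _.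
    rewrite -F5; apply: eq_bigr => j _.
    by rewrite -F4.
- have norm (G : S -> S -> S -> S -> R) :
      \sum_i \sum_l \sum_j \sum_k G i j k l = \sum_i \sum_j \sum_k \sum_l G i j k l.
    apply: eq_bigr => i _; rewrite exchange_big /=; apply: eq_bigr => j _.
    by rewrite exchange_big.
  have sw3 (G : S -> S -> S -> R) :
      \sum_i \sum_j \sum_k G i j k = \sum_k \sum_j \sum_i G i j k.
    rewrite exchange_big /=.
    under eq_bigr do rewrite exchange_big /=.
    by rewrite exchange_big.
  have E1 : \sum_i \sum_l \sum_j \sum_k N i j k l * d i j = \sum_i \sum_j L1 i j * d i j.
    rewrite norm; apply: eq_bigr => i _; apply: eq_bigr => j _.
    rewrite -F1 mulr_suml; apply: eq_bigr => k _.
    by rewrite -F3 mulr_suml.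
  have E2 : \sum_i \sum_l \sum_j \sum_k N i j k l * d k j = \sum_i \sum_j L2 i j * d i j.
    rewrite norm.
    transitivity (\sum_i \sum_j \sum_k M i j k * d k j).
      apply: eq_bigr => i _; apply: eq_bigr => j _; apply: eq_bigr => k _.
      by rewrite -F3 mulr_suml.
    rewrite sw3; apply: eq_bigr => k _; apply: eq_bigr => j _.
    by rewrite -F2 mulr_suml.
  have E3 : \sum_i \sum_l \sum_j \sum_k N i j k l * d k l = \sum_i \sum_j L3 i j * d i j.
    rewrite norm (sw3 (fun i j k => \sum_l N i j k l * d k l)) /=.
    transitivity (\sum_k \sum_l \sum_j \sum_i N i j k l * d k l).
      apply: eq_bigr => k _; rewrite exchange_big /=.
      under eq_bigr do rewrite exchange_big /=.
      rewrite exchange_big /=; apply: eq_bigr => l _.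
      by rewrite exchange_big.
    apply: eq_bigr => k _; apply: eq_bigr => l _.
    rewrite -F5 mulr_suml; apply: eq_bigr => j _.
    by rewrite -F4 mulr_suml.
  rewrite -E1 -E2 -E3 -!big_split /=; apply: ler_sum => i _.
  rewrite -!big_split /=; apply: ler_sum => l _.
  rewrite mulr_suml -!big_split /=; apply: ler_sum => j _.
  rewrite mulr_suml -!big_split /=; apply: ler_sum => k _.
  by rewrite -!mulrDr ler_wpM2l.
Qed.
End Glue.
Arguments glue {R S p q r t d L1 L2 L3}.

Section W1tri.
Variables (R : realType) (S : finType).
Local Open Scope classical_set_scope.

Definition costs (p q : S -> R) (d : S -> S -> R) := [set c | exists Lam, is_coupling p q Lam /\
               c = \sum_(i : S) \sum_(j : S) Lam i j * d i j].

Lemma costs_ne p q d : is_distr p -> is_distr q -> costs p q d !=set0.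
Proof.
move=> [p0 p1] [q0 q1].
exists (\sum_i \sum_j (p i * q j) * d i j), (fun i j => p i * q j); split => //.
split; first by move=> i j; rewrite mulr_ge0.
split; first by move=> i; rewrite -mulr_sumr q1 mulr1.
by move=> j; rewrite -mulr_suml p1 mul1r.
Qed.

Lemma costs_lb p q d : (forall i j, 0 <= d i j) -> lbound (costs p q d) 0.
Proof.
move=> d0 c [L [[L0 _] ->]].
by apply: sumr_ge0 => i _; apply: sumr_ge0 => j _; rewrite mulr_ge0.
Qed.

Lemma W1_le p q d c : (forall i j, 0 <= d i j) -> costs p q d c -> W1 p q d <= c.
Proof.
move=> d0 hc; apply: (ge_inf _ hc); exists 0; exact: costs_lb.
Qed.

Lemma W1_tri (p q r t : S -> R) (d : S -> S -> R) :
  is_distr p -> is_distr q -> is_distr r -> is_distr t ->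
  (forall i j, 0 <= d i j) ->
  (forall i j k l, d i l <= d i j + d k j + d k l) ->
  W1 p t d <= W1 p q d + W1 r q d + W1 r t d.
Proof.
move=> hp hq hr ht d0 dtri.
have H c1 c2 c3 : costs p q d c1 -> costs r q d c2 -> costs r t d c3 ->
    W1 p t d <= c1 + c2 + c3.
  move=> [L1 [h1 ->]] [L2 [h2 ->]] [L3 [h3 ->]].
  have [L [hL hc]] := glue (fun s => proj1 hq s) (fun s => proj1 hr s) dtri h1 h2 h3.
  apply: le_trans hc; apply: W1_le => //; by exists L.
have H1 c2 c3 : costs r q d c2 -> costs r t d c3 ->
    W1 p t d - c2 - c3 <= W1 p q d.
  move=> h2 h3; apply: lb_le_inf; first exact: costs_ne.
  move=> c1 h1; have := H _ _ _ h1 h2 h3; lra.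
have H2 c3 : costs r t d c3 -> W1 p t d - W1 p q d - c3 <= W1 r q d.
  move=> h3; apply: lb_le_inf; first exact: costs_ne.
  move=> c2 h2; have := H1 _ _ h2 h3; lra.
have H3 : W1 p t d - W1 p q d - W1 r q d <= W1 r t d.
  apply: lb_le_inf; first exact: costs_ne.
  move=> c3 h3; have := H2 _ h3; lra.
lra.
Qed.
End W1tri.
Arguments W1_tri {R S p q r t d}.

Lemma dn_ge0 (R : realType) (S A : finType)
  (P P' : S -> A -> S -> R) (Rw Rw' : S -> A -> R) (gamma : R) n x y :
  0 <= dn P P' Rw Rw' gamma n x y.
Proof.
case: n => [|n] //=.
apply: (big_rec (fun x => 0 <= x)) => // a z _ hz.
by rewrite le_max hz orbT.
Qed.

Theorem corollary2 (R : realType) (S A : finType)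
  (P P' : S -> A -> S -> R) (Rw Rw' : S -> A -> R) (gamma : R)
  (hgamma : 0 < gamma < 1)
  (hP : forall s a, is_distr (P s a))
  (hP' : forall s a, is_distr (P' s a)) :
  forall (si sj sk sl : S) (n : nat),
    dn P P' Rw Rw' gamma n si sl <=
      dn P P' Rw Rw' gamma n si sj + dn P P' Rw Rw' gamma n sk sj
      + dn P P' Rw Rw' gamma n sk sl.
Proof.
move=> si sj sk sl n; elim: n si sj sk sl => [|n IH] si sj sk sl /=.
  by rewrite !addr0.
have g0 : 0 <= gamma by case/andP: hgamma => /ltW.
apply: bigmax_le.
  by rewrite !addr_ge0 // (@dn_ge0 R S A P P' Rw Rw' gamma n.+1).
move=> a _.
set F := fun x y a => `|Rw x a - Rw' y a| + gamma * W1 (P x a) (P' y a) (dn P P' Rw Rw' gamma n).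
have -> : `|Rw si a - Rw' sl a| + gamma * W1 (P si a) (P' sl a) (dn P P' Rw Rw' gamma n)
   = F si sl a by [].
apply: (@le_trans _ _ (F si sj a + F sk sj a + F sk sl a)).
  rewrite /F.
  have hab : `|Rw si a - Rw' sl a| <= `|Rw si a - Rw' sj a| + `|Rw sk a - Rw' sj a| + `|Rw sk a - Rw' sl a|.
    have -> : Rw si a - Rw' sl a = (Rw si a - Rw' sj a) + (Rw' sj a - Rw sk a) + (Rw sk a - Rw' sl a) by ring.
    apply: (le_trans (ler_normD _ _)); rewrite lerD2r.
    by apply: (le_trans (ler_normD _ _)); rewrite (distrC (Rw' sj a)).
  have hw := W1_tri (hP si a) (hP' sj a) (hP sk a) (hP' sl a)
    (fun i j => @dn_ge0 R S A P P' Rw Rw' gamma n i j) (IH).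
  have hw' := ler_wpM2l g0 hw.
  rewrite !mulrDr in hw'; lra.
by rewrite !lerD // (le_bigmax _ (fun a => F _ _ a)).
Qed.
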